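(* Let $m,n,p,q,s,t$ be arbitrary integers, let $A(x_1,x_2)=\begin{bmatrix}sx_1 & x_2\\ mx_1+nx_2 & -sx_1\end{bmatrix}$, and let $$P(x_1,x_2,x_3,x_4)=\begin{bmatrix}tA(x_1,x_2) & A(x_3,x_4)\\ pA(x_1,x_2)+qA(x_3,x_4) & -tA(x_1,x_2)\end{bmatrix}.$$ Then there exist trilinear forms $w_1,\dots,w_4$ in independent variables $x_1,\dots,x_4,y_1,\dots,y_4,z_1,\dots,z_4$, with coefficients integer polynomials in $m,n,p,q,s,t$, such that $P(x)P(y)P(z)=P(w)$. Consequently the quaternary quartic form $f=\det P$ satisfies $f(x_1,\dots,x_4)f(y_1,\dots,y_4)f(z_1,\dots,z_4)=f(w_1,\dots,w_4)$ identically. *)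

(* Defs.v *)
From mathcomp Require Import all_boot all_order all_algebra.
From mathcomp Require Export mpoly.
Set Implicit Arguments. Unset Strict Implicit. Unset Printing Implicit Defensive.
Import Order.TTheory GRing.Theory Num.Theory.
Local Open Scope ring_scope.

Definition Amat (m n s : int) (x1 x2 : int) : 'M[int]_2 :=
  \matrix_(i < 2, j < 2)
    if i == 0 then (if j == 0 then s * x1 else x2)
    else (if j == 0 then m * x1 + n * x2 else - (s * x1)).

(* P(x1,x2,x3,x4) = [[t A(x1,x2), A(x3,x4)], [p A(x1,x2) + q A(x3,x4), - t A(x1,x2)]];
   the vector x : 'I_4 -> int stands for (x_1,x_2,x_3,x_4) = (x 0, x 1, x 2, x 3). *)
Definition Pmat (m n p q s t : int) (x : 'I_4 -> int) : 'M[int]_4 :=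
  let A12 := Amat m n s (x (inord 0)) (x (inord 1)) in
  let A34 := Amat m n s (x (inord 2)) (x (inord 3)) in
  block_mx (t *: A12) A34 (p *: A12 + q *: A34) (- (t *: A12)) : 'M[int]_(2 + 2).

Definition params (m n p q s t : int) : 'I_6 -> int :=
  fun i => nth 0 [:: m; n; p; q; s; t] i.

(* Main.v *)
Require Import Defs.
From mathcomp Require Import all_boot all_order all_algebra.
From mathcomp Require Import mpoly.
From mathcomp Require Import ring.
Import GRing.Theory.
Local Open Scope ring_scope.

(* triple products in span{e1,e2}, e1^2 = S^2, e2^2 = N, e1e2+e2e1 = M *)
Definition gam {R : pzRingType} (S M N : R) (a b c d : bool) : R :=
  let: (u, v) := match a, b, c with
  | false, false, false => (S * S, 0)
  | false, false, true => (0, S * S)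
  | true, true, false => (N, 0)
  | true, true, true => (0, N)
  | true, false, false => (0, S * S)
  | false, true, true => (N, 0)
  | false, true, false => (M, - (S * S))
  | true, false, true => (- N, M)
  end in if d then v else u.

Definition hib (k : nat) : bool := match k with 0 | 1 => false | _ => true end.

Definition cc (i j k l : 'I_4) : {mpoly int[6]} :=
  gam 'X_(inord 4) 'X_(inord 0) 'X_(inord 1) (odd i) (odd j) (odd k) (odd l)
  * gam 'X_(inord 5) 'X_(inord 2) 'X_(inord 3) (hib i) (hib j) (hib k) (hib l).

Lemma meval_gam (v : 'I_6 -> int) (S M N : {mpoly int[6]}) a b c d :
  (gam S M N a b c d).@[v] = gam S.@[v] M.@[v] N.@[v] a b c d.
Proof.
by case: a; case: b; case: c; case: d; rewrite /= ?(mevalM, mevalN, raddf0).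
Qed.

Lemma cc_eval m n p q s t i j k l :
  (cc i j k l).@[params m n p q s t] =
  gam s m n (odd i) (odd j) (odd k) (odd l)
  * gam t p q (hib i) (hib j) (hib k) (hib l).
Proof.
by rewrite /cc mevalM !meval_gam !mevalXU /params !inordK.
Qed.

Definition o0 : 'I_4 := @Ordinal 4 0 isT.
Definition o1 : 'I_4 := @Ordinal 4 1 isT.
Definition o2 : 'I_4 := @Ordinal 4 2 isT.
Definition o3 : 'I_4 := @Ordinal 4 3 isT.

Lemma sum4 (F : 'I_4 -> int) :
  \sum_(i < 4) F i = F o0 + F o1 + F o2 + F o3.
Proof.
rewrite !big_ord_recl big_ord0 addr0 !addrA.
by congr (_ + _ + _ + _); congr F; apply/val_inj.
Qed.

Definition Pe (m n p q s t : int) (x0 x1 x2 x3 : int) (i j : nat) : int :=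
  match i, j with
  | 0, 0 => t * (s * x0)
  | 0, 1 => t * x1
  | 0, 2 => s * x2
  | 0, 3 => x3
  | 1, 0 => t * (m * x0 + n * x1)
  | 1, 1 => t * - (s * x0)
  | 1, 2 => m * x2 + n * x3
  | 1, 3 => - (s * x2)
  | 2, 0 => p * (s * x0) + q * (s * x2)
  | 2, 1 => p * x1 + q * x3
  | 2, 2 => - (t * (s * x0))
  | 2, 3 => - (t * x1)
  | 3, 0 => p * (m * x0 + n * x1) + q * (m * x2 + n * x3)
  | 3, 1 => p * - (s * x0) + q * - (s * x2)
  | 3, 2 => - (t * (m * x0 + n * x1))
  | _, _ => - (t * - (s * x0))
  end.

Lemma Pmat_E m n p q s t x (i j : 'I_4) :
  Pmat m n p q s t x i j =
  Pe m n p q s t (x o0) (x o1) (x o2) (x o3) i j.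
Proof.
rewrite /Pmat.
have -> : (inord 0 : 'I_4) = o0 by apply/val_inj; rewrite /= inordK.
have -> : (inord 1 : 'I_4) = o1 by apply/val_inj; rewrite /= inordK.
have -> : (inord 2 : 'I_4) = o2 by apply/val_inj; rewrite /= inordK.
have -> : (inord 3 : 'I_4) = o3 by apply/val_inj; rewrite /= inordK.
rewrite /Pmat.
case: i => [[|[|[|[|i]]]] Hi] //; case: j => [[|[|[|[|j]]]] Hj] //.
all: rewrite /block_mx /col_mx /row_mx !mxE.
all: case: (@splitP 2 2 (Ordinal Hi)) => -[[|[|k]] Hk] //= Hk'; rewrite !mxE;
  case: (@splitP 2 2 (Ordinal Hj)) => -[[|[|l]] Hl] //= Hl'; rewrite ?mxE /=.
all: by [].
Qed.

Theorem mainTheorem12 :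
  exists c : 'I_4 -> 'I_4 -> 'I_4 -> 'I_4 -> {mpoly int[6]},
  forall (m n p q s t : int) (x y z : 'I_4 -> int),
    let w := fun l : 'I_4 =>
      \sum_(i < 4) \sum_(j < 4) \sum_(k < 4)
         (c i j k l).@[params m n p q s t] * x i * y j * z k in
    Pmat m n p q s t x *m Pmat m n p q s t y *m Pmat m n p q s t z
      = Pmat m n p q s t w
    /\ \det (Pmat m n p q s t x) * \det (Pmat m n p q s t y)
         * \det (Pmat m n p q s t z) = \det (Pmat m n p q s t w).
Proof.
exists cc => m n p q s t x y z w.
have E : Pmat m n p q s t x *m Pmat m n p q s t y *m Pmat m n p q s t z
      = Pmat m n p q s t w.
{ apply/matrixP => i j.
  rewrite mxE sum4 !Pmat_E !mxE !sum4 !Pmat_E /w !sum4 !cc_eval.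
  move: (x o0) (x o1) (x o2) (x o3) (y o0) (y o1) (y o2) (y o3)
        (z o0) (z o1) (z o2) (z o3) => x0 x1 x2 x3 y0 y1 y2 y3 z0 z1 z2 z3.
  case: i => [[|[|[|[|i]]]] Hi] //; case: j => [[|[|[|[|j]]]] Hj] //=.
  all: rewrite /gam /hib /=.
  all: ring. }
split=> //.
by rewrite -!det_mulmx E.
Qed.
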